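(* Let $(K,\mathrm{val})$ be a $2$-henselian valued field whose residue class field $F$ has characteristic $\neq2$ and is formally real, and suppose $(K,\mathrm{val})$ admits an angular component map $\mathrm{an}:K^\times\to F^\times$ (used as $\mathrm{p.an}$ in the definition of $\Phi^A$). Let $A$ be a subring with $B\subseteq A\subseteq K$ and let $f\in A\setminus\{0\}$. Then the quasi-quadratic module in $A$ generated by $f$, namely $\{f(u_1^2+\cdots+u_m^2): m\ge0,\ u_i\in A\}$, equals $\Phi^A(M_f,[\![\mathrm{val}(f)]\!])$, where $M_f=\{\mathrm{an}(f)(c_1^2+\cdots+c_m^2): m\ge 0,\ c_i\in F\}$ is the quasi-quadratic module of $F$ generated by $\mathrm{an}(f)$.
   Context: Let $(G,\le)$ be a totally ordered abelian group written multiplicatively with identity $e$; $G_{\ge e}=\{g\in G:g\ge e\}$, $G^2=\{g^2:g\in G\}$. Let $(K,\mathrm{val})$ be a valued field with surjective valuation $\mathrm{val}:K\to G\cup\{\infty\}$, valuation ring $B=\{x:\mathrm{val}(x)\ge e\}$, residue map $\pi:B\to F$, residue field $F$. A strict unit is $x\in B^\times$ with $\pi(x)=1$; when $\mathrm{char}F\ne2$, $2$-henselian is equivalent to every strict unit being a square in $K$. For a subring $A$ with $B\subseteq A\subseteq K$ put $H=\mathrm{val}(A^\times)$. For $g\in G$: $\overline g$ is its class in $G/G^2$, $[\![g]\!]$ its class in $G/H^2$; ''$\mathrm{val}(x)=\overline g$'' means $\overline{\mathrm{val}(x)}=\overline g$, similarly for $[\![\cdot]\!]$. A quasi-quadratic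 module in a commutative ring $R$ is a subset $M\subseteq R$ with $M+M\subseteq M$ and $a^2M\subseteq M$ for all $a\in R$. A pseudo-angular component map is a map $\mathrm{p.an}:K^\times\to F^\times$ such that: (1) $\mathrm{p.an}(u)=\pi(u)$ for $u\in B^\times$; (2) $\mathrm{p.an}(ux)=\pi(u)\mathrm{p.an}(x)$ for $u\in B^\times,x\in K^\times$; (3) for all $g\in G$, $c\in F^\times$ there is $w\in K$ with $\mathrm{val}(w)=g$, $\mathrm{p.an}(w)=c$; (4) for nonzero $x_1,x_2$ with $x_1+x_2\ne0$: if $\mathrm{val}(x_1)<\mathrm{val}(x_2)$ then $\mathrm{p.an}(x_1+x_2)=\mathrm{p.an}(x_1)$; if $\mathrm{val}(x_1)=\mathrm{val}(x_2)$ and $\mathrm{p.an}(x_1)+\mathrm{p.an}(x_2)\ne0$ then $\mathrm{val}(x_1+x_2)=\mathrm{val}(x_1)$ and $\mathrm{p.an}(x_1+x_2)=\mathrm{p.an}(x_1)+\mathrm{p.an}(x_2)$; (5) if $x,y\in K^\times$, $\overline{\mathrm{val}(x)}=\overline{\mathrm{val}(y)}$ and $\mathrm{p.an}(x)=\mathrm{p.an}(y)$ then $y=u^2x$ for some $u\in K^\times$; (6) for $a,u\in K^\times$ there is $k\in F^\times$ with $\mathrm{p.an}(au^2)=\mathrm{p.an}(a)k^2$. An angular component map $\mathrm{an}$ is a pseudo-angular component map that is a group homomorphism. $\Phi^A(M,[\![g]\!])=\{x\in A\setminus\{0\}:\ \mathrm{val}(x)=\overline g,\ (\mathrm{val}(x)=[\![g]\!]\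 \text{or}\ \mathrm{val}(x)>g),\ \mathrm{an}(x)\in M\}\cup\{0\}$. *)

(* Defs.v *)
From mathcomp Require Import all_boot all_order all_algebra.
Set Implicit Arguments. Unset Strict Implicit. Unset Printing Implicit Defensive.
Import Order.TTheory GRing.Theory.
Local Open Scope ring_scope.

(* The value group G is written ADDITIVELY (G : zmodType): identity e = 0,
   product gh = g + h, g^2 = g + g.  The total order is an explicit relation. *)

Section Defs.
Variable G : zmodType.
Variable leG : G -> G -> Prop.

Definition ltG (g h : G) : Prop := leG g h /\ g <> h.

Definition is_ordered_group : Prop :=
  (forall g, leG g g) /\
  (forall g h, leG g h -> leG h g -> g = h) /\
  (forall g h k, leG g h -> leG h k -> leG g k) /\
  (forall g h, leG g h \/ leG h g) /\
  (forall g h k, leG g h -> leG (g + k) (h + k)).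

Variable K : fieldType.
(* val x for x <> 0; the value val 0 is irrelevant (it stands for infinity) *)
Variable val : K -> G.

Definition is_valuation : Prop :=
  (forall x y : K, x != 0 -> y != 0 -> val (x * y) = val x + val y) /\
  (forall x y : K, x != 0 -> y != 0 -> x + y != 0 ->
      leG (val x) (val (x + y)) \/ leG (val y) (val (x + y))) /\
  (forall g : G, exists x : K, x != 0 /\ val x = g).

Definition inB (x : K) : Prop := x = 0 \/ leG 0 (val x).
Definition unitB (x : K) : Prop := x != 0 /\ inB x /\ inB x^-1.

Variable F : fieldType.
Variable pi : K -> F.

Definition is_residue_map : Prop :=
  (forall x y, inB x -> inB y -> pi (x + y) = pi x + pi y) /\
  (forall x y, inB x -> inB y -> pi (x * y) = pi x * pi y) /\
  pi 1 = 1 /\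
  (forall x, inB x -> (pi x = 0 <-> (x = 0 \/ ltG 0 (val x)))) /\
  (forall c : F, exists x, inB x /\ pi x = c).

Definition strict_unit (x : K) : Prop := unitB x /\ pi x = 1.

(* 2-henselian, in the form valid when char F <> 2 *)
Definition two_henselian_sq : Prop :=
  forall x, strict_unit x -> exists y : K, x = y ^+ 2.

Definition eqG2 (g h : G) : Prop := exists k : G, g - h = k + k.

(* pseudo-angular component map (an x only meaningful for x <> 0) *)
Definition is_pseudo_an (an : K -> F) : Prop :=
  (forall x, x != 0 -> an x != 0) /\
  (forall u, unitB u -> an u = pi u) /\
  (forall u x, unitB u -> x != 0 -> an (u * x) = pi u * an x) /\
  (forall (g : G) (c : F), c != 0 -> exists w, w != 0 /\ val w = g /\ an w = c) /\
  (forall x1 x2, x1 != 0 -> x2 != 0 -> x1 + x2 != 0 ->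
      (ltG (val x1) (val x2) -> an (x1 + x2) = an x1) /\
      (val x1 = val x2 -> an x1 + an x2 != 0 ->
          val (x1 + x2) = val x1 /\ an (x1 + x2) = an x1 + an x2)) /\
  (forall x y, x != 0 -> y != 0 -> eqG2 (val x) (val y) -> an x = an y ->
      exists u, u != 0 /\ y = u ^+ 2 * x) /\
  (forall a u, a != 0 -> u != 0 ->
      exists k, k != 0 /\ an (a * u ^+ 2) = an a * k ^+ 2).

Definition is_an (an : K -> F) : Prop :=
  is_pseudo_an an /\
  (forall x y, x != 0 -> y != 0 -> an (x * y) = an x * an y).

Variable A : K -> Prop.

Definition unitA (u : K) : Prop := A u /\ u != 0 /\ A u^-1.

Definition eqH2 (g h : G) : Prop :=
  exists u, unitA u /\ g - h = val u + val u.

Definition Phi (an : K -> F) (M : F -> Prop) (g : G) (x : K) : Prop :=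
  x = 0 \/
  (A x /\ x != 0 /\ eqG2 (val x) g /\ (eqH2 (val x) g \/ ltG g (val x)) /\
   M (an x)).

End Defs.

Definition formally_real (F : fieldType) : Prop :=
  forall s : seq F, \sum_(c <- s) c ^+ 2 != -1.

Definition is_subring (K : fieldType) (A : K -> Prop) : Prop :=
  A 0 /\ A 1 /\ (forall x y, A x -> A y -> A (x + y)) /\
  (forall x, A x -> A (- x)) /\ (forall x y, A x -> A y -> A (x * y)).

Definition qqm_F (F : fieldType) (c : F) (y : F) : Prop :=
  exists s : seq F, y = c * \sum_(d <- s) d ^+ 2.

Definition qqm_A (K : fieldType) (A : K -> Prop) (f : K) (x : K) : Prop :=
  exists s : seq K, (forall u, u \in s -> A u) /\ x = f * \sum_(u <- s) u ^+ 2.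

(* Main.v *)
Require Import Defs.
From mathcomp Require Import all_boot all_order all_algebra.
From mathcomp Require Import ring.
Set Implicit Arguments. Unset Strict Implicit. Unset Printing Implicit Defensive.
Import GRing.Theory.
Local Open Scope ring_scope.

Section Grp.
Variable G : zmodType.
Variable leG : G -> G -> Prop.
Hypothesis hG : is_ordered_group leG.

Lemma lrefl g : leG g g. Proof. by case: hG => h1 _; apply: h1. Qed.
Lemma lanti g h : leG g h -> leG h g -> g = h. Proof. by case: hG => _ [h1 _]; apply: h1. Qed.
Lemma ltrans g h k : leG g h -> leG h k -> leG g k. Proof. by case: hG => _ [_ [h1 _]]; apply: h1. Qed.
Lemma ltot g h : leG g h \/ leG h g. Proof. by case: hG => _ [_ [_ [h1 _]]]. Qed.
Lemma lcomp g h k : leG g h -> leG (g + k) (h + k). Proof. by case: hG => _ [_ [_ [_ h1]]]; apply: h1. Qed.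

Lemma lcompr g h k : leG (g + k) (h + k) -> leG g h.
Proof. by move=> /(lcomp (-k)); rewrite !addrK. Qed.

Lemma le0N g : leG 0 g -> leG (-g) 0.
Proof. by move=> /(lcomp (-g)); rewrite add0r subrr. Qed.

Lemma leN0 g : leG g 0 -> leG 0 (-g).
Proof. by move=> /(lcomp (-g)); rewrite add0r subrr. Qed.

Lemma leNN0 g : leG 0 (-g) -> leG g 0.
Proof. by move=> /le0N; rewrite opprK. Qed.

Lemma addge0 a b : leG 0 a -> leG 0 b -> leG 0 (a + b).
Proof.
move=> ha hb; apply: ltrans hb _; have := lcomp b ha; by rewrite add0r.
Qed.

Lemma double0 (a : G) : a + a = 0 -> a = 0.
Proof.
move=> h; case: (ltot 0 a) => ha.
- have h1 := lcomp a ha; rewrite add0r h in h1; exact: lanti h1 ha.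
- have h1 := lcomp a ha; rewrite add0r h in h1; exact: lanti ha h1.
Qed.
End Grp.
Section Val.
Variable G : zmodType.
Variable leG : G -> G -> Prop.
Hypothesis hG : is_ordered_group leG.
Variable K : fieldType.
Variable val : K -> G.
Hypothesis hval : is_valuation leG val.
Variable F : fieldType.
Variable pi : K -> F.
Hypothesis hpi : is_residue_map leG val pi.

Local Notation inB := (inB leG val).
Local Notation unitB := (unitB leG val).

Lemma valM x y : x != 0 -> y != 0 -> val (x * y) = val x + val y.
Proof. by case: hval => h _; apply: h. Qed.

Lemma valD x y : x != 0 -> y != 0 -> x + y != 0 ->
      leG (val x) (val (x + y)) \/ leG (val y) (val (x + y)).
Proof. by case: hval => _ [h _]; apply: h. Qed.

Lemma val1 : val 1 = 0.
Proof.
have := valM (oner_neq0 K) (oner_neq0 K); rewrite mulr1 => /(congr1 (fun g => g - val 1)).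
by rewrite addrK subrr.
Qed.

Lemma valV x : x != 0 -> val x^-1 = - val x.
Proof.
move=> hx; have := valM hx (invr_neq0 hx); rewrite mulfV // val1.
by move=> /(congr1 (fun g => g - val x)); rewrite add0r addrAC subrr add0r => <-.
Qed.

Lemma valX2 x : x != 0 -> val (x ^+ 2) = val x + val x.
Proof. by move=> hx; rewrite expr2 valM. Qed.

Lemma inB0 : inB 0. Proof. by left. Qed.
Lemma inB1 : inB 1. Proof. by right; rewrite val1; apply: lrefl. Qed.

Lemma inBM x y : inB x -> inB y -> inB (x * y).
Proof.
case=> [->|hx]; first by rewrite mul0r; left.
case=> [->|hy]; first by rewrite mulr0; left.
case: (eqVneq x 0) => [->|x0]; first by rewrite mul0r; left.
case: (eqVneq y 0) => [->|y0]; first by rewrite mulr0; left.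
by right; rewrite valM //; apply: addge0.
Qed.

Lemma inBD x y : inB x -> inB y -> inB (x + y).
Proof.
case=> [->|hx]; first by rewrite add0r.
case=> [->|hy]; first by rewrite addr0; right.
case: (eqVneq x 0) => [->|x0]; first by rewrite add0r; right.
case: (eqVneq y 0) => [->|y0]; first by rewrite addr0; right.
case: (eqVneq (x + y) 0) => [->|s0]; first by left.
right; case: (valD x0 y0 s0) => h; exact: ltrans h.
Qed.

Lemma unitB_val0 w : unitB w -> val w = 0.
Proof.
case=> w0 [hB hB']; case: hB => [e|hw]; first by rewrite e eqxx in w0.
case: hB' => [e|hw']; first by move/eqP: e; rewrite invr_eq0 (negPf w0).
rewrite valV // in hw'; exact: (lanti hG (leNN0 hG hw') hw).
Qed.

Lemma val0_unitB w : w != 0 -> val w = 0 -> unitB w.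
Proof.
move=> w0 hw; split=> //; split; right; rewrite ?valV // hw ?oppr0; exact: lrefl.
Qed.

Lemma piD x y : inB x -> inB y -> pi (x + y) = pi x + pi y.
Proof. by case: hpi => h _; apply: h. Qed.
Lemma piM x y : inB x -> inB y -> pi (x * y) = pi x * pi y.
Proof. by case: hpi => _ [h _]; apply: h. Qed.
Lemma pi1 : pi 1 = 1.
Proof. by case: hpi => _ [_ [h _]]. Qed.
Lemma pi_eq0 x : inB x -> (pi x = 0 <-> (x = 0 \/ ltG leG 0 (val x))).
Proof. by case: hpi => _ [_ [_ [h _]]]; apply: h. Qed.
Lemma pi_surj c : exists x, inB x /\ pi x = c.
Proof. by case: hpi => _ [_ [_ [_ h]]]. Qed.

Lemma pi0 : pi 0 = 0.
Proof. by apply/(pi_eq0 inB0); left. Qed.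

Lemma piX2 x : inB x -> pi (x ^+ 2) = pi x ^+ 2.
Proof. by move=> hx; rewrite !expr2 piM. Qed.

Lemma unitB_pi w : unitB w -> pi w != 0.
Proof.
move=> hw; have v0 := unitB_val0 hw; case: hw => w0 [hwB _].
apply/eqP => /(pi_eq0 hwB) [/eqP|[_]]; by rewrite ?(negPf w0) ?v0.
Qed.

Lemma pi_unitB w : inB w -> pi w != 0 -> unitB w.
Proof.
move=> hw hp; have w0 : w != 0 by apply: contraNneq hp => ->; rewrite pi0.
apply: val0_unitB => //; case: hw => [/eqP|hw]; first by rewrite (negPf w0).
case: (eqVneq (val w) 0) => [->|ne] //.
have: pi w = 0.
  apply/(pi_eq0 (or_intror hw)); right; split; first exact: hw.
  by move=> e; move: ne; rewrite -e eqxx.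
by move/eqP: hp.
Qed.
End Val.
Lemma sumsq_map (R : comPzRingType) (s : seq R) a :
  \sum_(e <- [seq a * d | d <- s]) e ^+ 2 = a ^+ 2 * \sum_(d <- s) d ^+ 2.
Proof. rewrite big_map big_distrr; apply: eq_bigr => d _; exact: exprMn. Qed.

Lemma sos_add (F : fieldType) (hreal : formally_real F) (c : F) cs :
  c != 0 \/ \sum_(e <- cs) e ^+ 2 != 0 -> c ^+ 2 + \sum_(e <- cs) e ^+ 2 != 0.
Proof.
case: (eqVneq c 0) => [->|c0] h.
  by rewrite expr2 mulr0 add0r; case: h => //; rewrite eqxx.
apply/eqP => h0.
have hs : \sum_(e <- cs) e ^+ 2 = - c ^+ 2 by apply: (addrI (c ^+ 2)); rewrite h0 subrr.
move/eqP: (hreal [seq c^-1 * e | e <- cs]); apply.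
rewrite sumsq_map hs; field; exact: c0.
Qed.
Section Main.
Variable G : zmodType.
Variable leG : G -> G -> Prop.
Hypothesis hG : is_ordered_group leG.
Variable K : fieldType.
Variable val : K -> G.
Hypothesis hval : is_valuation leG val.
Variable F : fieldType.
Variable pi : K -> F.
Hypothesis hpi : is_residue_map leG val pi.
Hypothesis hreal : formally_real F.
Variable A : K -> Prop.
Hypothesis hA : is_subring A.
Hypothesis hBA : forall x, inB leG val x -> A x.

Local Notation inB := (inB leG val).
Local Notation unitB := (unitB leG val).

Lemma AM x y : A x -> A y -> A (x * y).
Proof. by case: hA => _ [_ [_ [_ h]]]; apply: h. Qed.

Lemma unitB_inB w : unitB w -> inB w. Proof. by case=> _ []. Qed.

Lemma piV z : unitB z -> pi z^-1 = (pi z)^-1.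
Proof.
move=> hz; have pz := unitB_pi hG hval hpi hz.
case: (hz) => z0 [zB ziB].
have h : pi z * pi z^-1 = 1 by rewrite -(piM hpi) // mulfV // (pi1 hpi).
by apply: (mulfI pz); rewrite h mulfV.
Qed.

Lemma struct (s : seq K) : (forall u, u \in s -> A u) ->
  \sum_(u <- s) u ^+ 2 = 0 \/
  exists v w, [/\ v != 0, A v, unitB w,
     (exists cs : seq F, pi w = \sum_(c <- cs) c ^+ 2) &
     \sum_(u <- s) u ^+ 2 = v ^+ 2 * w].
Proof.
elim: s => [|u s IH] hs; first by left; rewrite big_nil.
rewrite big_cons.
have Au : A u by apply: hs; rewrite mem_head.
have IH' := IH (fun x hx => hs x ltac:(by rewrite in_cons hx orbT)).
case: (eqVneq u 0) => [->|u0]; first by rewrite expr2 mulr0 add0r.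
case: IH' => [->|[v [w [v0 Av uw [cs hcs] ->]]]].
  right; exists u, 1; split => //.
  - by apply: (val0_unitB hG hval); [exact: oner_neq0 | exact: (val1 hval)].
  - by exists [:: 1]; rewrite big_seq1 expr1n (pi1 hpi).
  - by rewrite addr0 mulr1.
have wB := unitB_inB uw.
have pw := unitB_pi hG hval hpi uw.
have caseA : leG (val v) (val u) -> exists v0 w0, [/\ v0 != 0, A v0, unitB w0,
     (exists cs : seq F, pi w0 = \sum_(c <- cs) c ^+ 2) &
     u ^+ 2 + v ^+ 2 * w = v0 ^+ 2 * w0].
  move=> hvu.
  have rB : inB (u / v).
    right; rewrite (valM hval) ?invr_neq0 // (valV hval) //.
    by have := lcomp hG (- val v) hvu; rewrite subrr.
  have r2B : inB ((u / v) ^+ 2) by rewrite expr2; apply: inBM.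
  have w'B : inB ((u / v) ^+ 2 + w) by apply: inBD.
  have pw' : pi ((u / v) ^+ 2 + w) = pi (u / v) ^+ 2 + \sum_(c <- cs) c ^+ 2.
    by rewrite (piD hpi) // (piX2 hpi) // hcs.
  exists v, ((u / v) ^+ 2 + w); split => //.
  - apply: (pi_unitB hG hval hpi w'B); rewrite pw'; apply: sos_add => //.
    by right; rewrite -hcs.
  - by exists (pi (u / v) :: cs); rewrite big_cons.
  - by field.
right; case: (ltot hG (val v) (val u)) => [|h]; first exact: caseA.
case: (eqVneq (val u) (val v)) => [e|ne]; first by apply: caseA; rewrite e; exact: lrefl.
have rB : leG 0 (val (v / u)).
  rewrite (valM hval) ?invr_neq0 // (valV hval) //.
  by have := lcomp hG (- val u) h; rewrite subrr.
have pr : pi (v / u) = 0.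
  apply/(pi_eq0 hpi (or_intror rB)); right; split => // e.
  move: ne; rewrite (valM hval) ?invr_neq0 // (valV hval) // in e.
  by move/eqP: e; rewrite eq_sym subr_eq0 eq_sym => ->.
have vB : inB (v / u) by right.
have r2B' : inB ((v / u) ^+ 2) by rewrite expr2; apply: inBM.
have r2B : inB ((v / u) ^+ 2 * w) by apply: inBM.
have w'B : inB ((v / u) ^+ 2 * w + 1) by apply: inBD => //; exact: inB1.
have pw' : pi ((v / u) ^+ 2 * w + 1) = 1.
  rewrite (piD hpi) //; last exact: inB1.
  by rewrite (pi1 hpi) (piM hpi) // (piX2 hpi) // pr expr2 !mul0r add0r.
exists u, ((v / u) ^+ 2 * w + 1); split => //.
- by apply: (pi_unitB hG hval hpi w'B); rewrite pw' oner_neq0.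
- by exists [:: 1]; rewrite big_seq1 expr1n pw'.
- by field.
Qed.
End Main.
Section Main2.
Variable G : zmodType.
Variable leG : G -> G -> Prop.
Hypothesis hG : is_ordered_group leG.
Variable K : fieldType.
Variable val : K -> G.
Hypothesis hval : is_valuation leG val.
Variable F : fieldType.
Variable pi : K -> F.
Hypothesis hpi : is_residue_map leG val pi.
Hypothesis hreal : formally_real F.
Hypothesis hhens : two_henselian_sq leG val pi.
Variable an : K -> F.
Hypothesis han : is_an leG val pi an.
Variable A : K -> Prop.
Hypothesis hA : is_subring A.
Hypothesis hBA : forall x, inB leG val x -> A x.
Variable f : K.
Hypothesis hfA : A f.
Hypothesis hf0 : f != 0.

Local Notation inB := (inB leG val).
Local Notation unitB := (unitB leG val).

Lemma lift (es : seq F) : exists ds : seq K, (forall d, d \in ds -> inB d) /\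
   inB (\sum_(d <- ds) d ^+ 2) /\ pi (\sum_(d <- ds) d ^+ 2) = \sum_(e <- es) e ^+ 2.
Proof.
elim: es => [|e es [ds [hds [hB hp]]]].
  by exists [::]; rewrite !big_nil; split => //; split; [exact: inB0|exact: (pi0 hpi)].
have [d [dB <-]] := pi_surj hpi e.
have d2B : inB (d ^+ 2) by rewrite expr2; apply: (inBM hG hval).
exists (d :: ds); split.
  by move=> x; rewrite in_cons => /orP [/eqP ->|]; [|apply: hds].
rewrite !big_cons; split; first by apply: (inBD hG hval).
by rewrite (piD hpi) // (piX2 hpi) // hp.
Qed.

Lemma anM x y : x != 0 -> y != 0 -> an (x * y) = an x * an y.
Proof. by case: han => _ h; apply: h. Qed.
Lemma an_unit u : unitB u -> an u = pi u.
Proof. by case: han => [[_ [h _]] _]; apply: h. Qed.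
Lemma an_neq0 x : x != 0 -> an x != 0.
Proof. by case: han => [[h _] _]; apply: h. Qed.

Lemma main_sec x : qqm_A A f x <-> Phi leG val A an (qqm_F (an f)) (val f) x.
Proof.
split.
  case=> s [hs ->].
  case: (struct hG hval hpi hreal hs) => [->|[v [w [v0 Av uw [cs hcs] ->]]]].
    by left; rewrite mulr0.
  have w0 : w != 0 by case: uw.
  have wB := unitB_inB uw.
  have x0 : f * (v ^+ 2 * w) != 0 by rewrite !mulf_neq0 ?expf_neq0.
  have vx : val (f * (v ^+ 2 * w)) = val f + (val v + val v).
    rewrite (valM hval) ?mulf_neq0 ?expf_neq0 // (valM hval) ?expf_neq0 //.
    by rewrite (valX2 hval) // (unitB_val0 hG hval uw) addr0.
  right; split.
    by apply: (AM hA) => //; apply: (AM hA); [rewrite expr2; apply: (AM hA) | apply: hBA].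
  split => //; split.
    by exists (val v); rewrite vx addrAC subrr add0r.
  split; last first.
    exists [seq an v * c | c <- cs]; rewrite sumsq_map -hcs.
    rewrite anM ?mulf_neq0 ?expf_neq0 // anM ?expf_neq0 // (an_unit uw).
    by rewrite expr2 anM // expr2 mulrA.
  have case1 : leG (val v) 0 -> eqH2 val A (val (f * (v ^+ 2 * w))) (val f).
    move=> h; exists v; split; last by rewrite vx addrAC subrr add0r.
    split => //; split => //; apply: hBA; right; rewrite (valV hval) //.
    exact: leN0.
  case: (ltot hG (val v) 0) => h; first by left; apply: case1.
  case: (eqVneq (val v) 0) => [e|ne]; first by left; apply: case1; rewrite e; exact: lrefl.
  right; rewrite vx; split.
    by have := lcomp hG (val f) (addge0 hG h h); rewrite add0r addrC.
  move=> e; move: ne; have : val v + val v = 0.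
    by move/(congr1 (fun g => g - val f)): e; rewrite subrr addrAC subrr add0r => <-.
  by move/(double0 hG) ->; rewrite eqxx.
case=> [->|[Ax [x0 [[k hk] [hH [cs hcs]]]]]].
  by exists [::]; split => //; rewrite big_nil mulr0.
have [u [Au u0 hu]] : exists u, [/\ A u, u != 0 & val x - val f = val u + val u].
  case: hH => [[u [[Au [u0 _]] e]]|hlt]; first by exists u.
  have [u [u0 vu]] : exists u, u != 0 /\ val u = k by case: hval => _ [_ h]; apply: h.
  exists u; split => //; last by rewrite vu.
  apply: hBA; right; rewrite vu.
  case: (ltot hG 0 k) => // h; exfalso.
  have h1 : leG (k + k) 0.
    have h0 := lcomp hG k h; rewrite add0r in h0; exact: (ltrans hG h0 h).
  rewrite -hk in h1; have := lcomp hG (val f) h1; rewrite subrK add0r => h2.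
  by case: hlt => h3 h4; apply: h4; apply: (lanti hG).
pose y := x / (f * u ^+ 2).
have fu0 : f * u ^+ 2 != 0 by rewrite mulf_neq0 ?expf_neq0.
have y0 : y != 0 by rewrite /y mulf_neq0 ?invr_neq0.
have vy : val y = 0.
  rewrite /y (valM hval) ?invr_neq0 // (valV hval) // (valM hval) ?expf_neq0 //.
  by rewrite (valX2 hval) // -hu (addrC (val f)) subrK subrr.
have uy : unitB y by apply: (val0_unitB hG hval).
have ex : x = f * u ^+ 2 * y by rewrite /y mulrC mulfVK.
have anu0 : an u != 0 by apply: an_neq0.
have py : pi y = \sum_(e <- [seq (an u)^-1 * c | c <- cs]) e ^+ 2.
  rewrite sumsq_map; have := hcs; rewrite {1}ex anM // anM ?expf_neq0 // (an_unit uy).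
  rewrite -mulrA => /(mulfI (an_neq0 hf0)) <-.
  by rewrite expr2 anM // -expr2; field.
have [ds [hds [zB pz]]] := lift [seq (an u)^-1 * c | c <- cs].
set z := \sum_(d <- ds) d ^+ 2 in zB pz.
have uz : unitB z.
  by apply: (pi_unitB hG hval hpi zB); rewrite pz -py (unitB_pi hG hval hpi uy).
have z0 : z != 0 by case: uz.
have qB : inB (y / z) by apply: (inBM hG hval); [exact: (unitB_inB uy) | case: uz => _ []].
have pq : pi (y / z) = 1.
  by rewrite (piM hpi) //; [rewrite (piV hG hval hpi uz) pz -py mulfV // (unitB_pi hG hval hpi uy) | exact: (unitB_inB uy) | case: uz => _ []].
have sq : strict_unit leG val pi (y / z).
  by split => //; apply: (pi_unitB hG hval hpi qB); rewrite pq oner_neq0.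
have [t ht] := hhens sq.
have t0 : t != 0.
  by apply: contraNneq (mulf_neq0 y0 (invr_neq0 z0)) => t0; rewrite ht t0 expr2 mulr0.
have tB : inB t.
  right; have := unitB_val0 hG hval (proj1 sq); rewrite ht (valX2 hval) //.
  by move/(double0 hG) ->; exact: lrefl.
exists [seq (u * t) * d | d <- ds]; split.
  move=> w /mapP [d hd ->]; apply: (AM hA); first by apply: (AM hA) => //; apply: hBA.
  by apply: hBA; apply: hds.
rewrite sumsq_map -/z ex.
have -> : y = t ^+ 2 * z by rewrite -ht mulfVK.
by rewrite exprMn !mulrA.
Qed.
End Main2.

Unset Implicit Arguments.

Theorem mainTheorem14
  (G : zmodType) (leG : G -> G -> Prop) (hG : is_ordered_group leG)
  (K : fieldType) (val : K -> G) (hval : is_valuation leG val)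
  (F : fieldType) (pi : K -> F) (hpi : is_residue_map leG val pi)
  (hchar : (2%:R : F) != 0) (hreal : formally_real F)
  (hhens : two_henselian_sq leG val pi)
  (an : K -> F) (han : is_an leG val pi an)
  (A : K -> Prop) (hA : is_subring A) (hBA : forall x, inB leG val x -> A x)
  (f : K) (hfA : A f) (hf0 : f != 0) :
  forall x : K,
    qqm_A A f x <-> Phi leG val A an (qqm_F (an f)) (val f) x.
Proof.
exact: (main_sec hG hval hpi hreal hhens han hA hBA hfA hf0).
Qed.
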